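(* Let $q\ge1$, $d\ge1$, and $\mathcal{D}=\{(b_1,B_1),\ldots,(b_d,B_d)\}\subseteq[q]\times2^{[q]}$ with $|B_i|\ge2$ for all $i\in[d]$. Then $\mathcal{E}_{\mathcal{D}}=\mathcal{E}_{\mathcal{D}^\circ}=\mathcal{E}_{\overline{\mathcal{D}}}=\mathcal{E}_{\min(\mathcal{D})}=\mathcal{E}_{\min(\overline{\mathcal{D}})}=\mathcal{E}_{\min(\mathcal{D}^\circ)}$.
   Context: With $\Lambda=[q]$: a pair $(b,B)$ is trivial if $b\in B$; $(b,B)^{\sf ex}=\{(b,C):B\subseteq C\subseteq\Lambda\}$; $(b,B)\circ(c,C)=(b,(B\smallsetminus\{c\})\cup C)$; for a set $\mathcal{D}$ of pairs, $\mathcal{D}^\circ$ is the set of all compositions $(c_1,C_1)\circ\cdots\circ(c_s,C_s)$, $s\ge1$, $(c_i,C_i)\in\mathcal{D}$, with all possible bracketings; $\mathcal{D}^{\sf ex}$ is the union of extensions of elements of $\mathcal{D}$; $\Lambda^{\sf triv}=\{(b,B):b\in B\}$; $\overline{\mathcal{D}}=(\mathcal{D}^\circ)^{\sf ex}\cup\Lambda^{\sf triv}$; $\min(\mathcal{D})$ is the set of nontrivial $(b,B)\in\mathcal{D}$ such that no $(b,C)\in\mathcal{D}$ has $C\subsetneq B$. $\mathcal{D}$-extremal ideals: $S_{[q]}=\mathsf k[y_A:\emptyset\ne A\subseteq[q]]$ over a field $\mathsf k$; for $\mathcal{D}'\subseteq[q]\times(2^{[q]}\smallsetminus\{\emptyset\})$,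 $Q(\mathcal{D}')=\{A\subseteq[q]:A\ne\emptyset,\ A\cap B\ne\emptyset\text{ for all }(b,B)\in\mathcal{D}'\text{ with }b\in A\}$, $\varepsilon_{\mathcal{D}',i}=\prod_{A\in Q(\mathcal{D}'),\,i\in A}y_A$, and $\mathcal{E}_{\mathcal{D}'}=(\varepsilon_{\mathcal{D}',1},\ldots,\varepsilon_{\mathcal{D}',q})$. *)

(* Defs.v *)
From HB Require Import structures.
From mathcomp Require Import all_boot all_algebra.
From mathcomp Require Import mpoly.
From Stdlib Require Import ClassicalDescription.

Set Implicit Arguments.
Unset Strict Implicit.
Unset Printing Implicit Defensive.

Import GRing.Theory.
Local Open Scope ring_scope.

Definition decP (P : Prop) : bool :=
  if excluded_middle_informative P then true else false.

(* Pairs (b,B) with b in Lambda = [q] (encoded as 'I_q) and B a subset. *)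
Definition Pr (q : nat) : finType := ('I_q * {set 'I_q})%type.

Definition trivial_pair (q : nat) (p : Pr q) : bool := p.1 \in p.2.

Definition ext_pair (q : nat) (p : Pr q) : {set Pr q} :=
  [set r : Pr q | (r.1 == p.1) && (p.2 \subset r.2)].

Definition comp_pair (q : nat) (p r : Pr q) : Pr q :=
  (p.1, (p.2 :\ r.1) :|: r.2).

Inductive in_circ (q : nat) (D : {set Pr q}) : Pr q -> Prop :=
  | in_circ_base p : p \in D -> in_circ D p
  | in_circ_comp p r : in_circ D p -> in_circ D r -> in_circ D (comp_pair p r).

Definition circ (q : nat) (D : {set Pr q}) : {set Pr q} :=
  [set p | decP (in_circ D p)].

Definition ext (q : nat) (D : {set Pr q}) : {set Pr q} :=
  \bigcup_(p in D) ext_pair p.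

Definition triv (q : nat) : {set Pr q} := [set p : Pr q | trivial_pair p].

Definition closureD (q : nat) (D : {set Pr q}) : {set Pr q} :=
  ext (circ D) :|: triv q.

Definition minD (q : nat) (D : {set Pr q}) : {set Pr q} :=
  [set p in D | ~~ trivial_pair p &&
     [forall r in D, ~~ ((r.1 == p.1) && (r.2 \proper p.2))]].

Definition NE (q : nat) : finType := {A : {set 'I_q} | A != set0}.

(* S_[q] = k[y_A : A nonempty] *)
Definition S (k : fieldType) (q : nat) := {mpoly k[#|{: NE q}|]}.

Definition y (k : fieldType) (q : nat) (A : NE q) : S k q := 'X_(enum_rank A).

Definition Qset (q : nat) (D : {set Pr q}) : {set NE q} :=
  [set A : NE q | [forall p in D, (p.1 \in val A) ==> (val A :&: p.2 != set0)]].

Definition eps (k : fieldType) (q : nat) (D : {set Pr q}) (i : 'I_q) : S k q :=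
  \prod_(A in Qset D | i \in val A) y k A.

(* The ideal E_{D'} = (eps_1, ..., eps_q) of S_[q], as a membership predicate. *)
Definition E (k : fieldType) (q : nat) (D : {set Pr q}) : S k q -> Prop :=
  fun f => exists c : 'I_q -> S k q, f = \sum_(i < q) c i * eps k D i.

Definition same_ideal (R : Type) (I J : R -> Prop) : Prop :=
  forall f, I f <-> J f.

Arguments y k {q} A.
Arguments eps k {q} D i.
Arguments E k {q} D f.

(* Main.v *)
Require Import Defs.
From mathcomp Require Import all_boot all_algebra.
From mathcomp Require Import mpoly.
From Stdlib Require Import ClassicalDescription.

Set Implicit Arguments.
Unset Strict Implicit.
Unset Printing Implicit Defensive.

Definition good (q : nat) (A : NE q) (p : Pr q) : bool :=
  (p.1 \in val A) ==> (val A :&: p.2 != set0).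

Lemma decPP (P : Prop) : Defs.decP P -> P.
Proof. by rewrite /Defs.decP; case: excluded_middle_informative. Qed.

Lemma decPI (P : Prop) : P -> Defs.decP P.
Proof. by rewrite /Defs.decP; case: excluded_middle_informative. Qed.

Lemma inQ q (X : {set Pr q}) A : (A \in Qset X) = [forall p in X, good A p].
Proof. by rewrite inE. Qed.

Lemma Qset_le q (X Y : {set Pr q}) :
  (forall A, (forall r, r \in X -> good A r) -> forall p, p \in Y -> good A p) ->
  Qset X \subset Qset Y.
Proof.
move=> H; apply/subsetP => A; rewrite !inQ => /forall_inP HX.
by apply/forall_inP; apply: H.
Qed.

Lemma Qset_anti q (X Y : {set Pr q}) : X \subset Y -> Qset Y \subset Qset X.
Proof. by move=> /subsetP sXY; apply: Qset_le => A H p /sXY; apply: H. Qed.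

Lemma good_comp q (A : NE q) p r : good A p -> good A r -> good A (comp_pair p r).
Proof.
move=> /implyP Hp /implyP Hr; apply/implyP => /= hb.
case/set0Pn: (Hp hb) => x /setIP [xA xB].
have [ex|nex] := eqVneq x r.1.
  subst x; case/set0Pn: (Hr xA) => z /setIP [zA zC].
  by apply/set0Pn; exists z; rewrite inE zA in_setU zC orbT.
by apply/set0Pn; exists x; rewrite inE xA in_setU in_setD1 nex xB.
Qed.

Lemma good_ext q (A : NE q) (p r : Pr q) : good A r -> r.1 = p.1 -> r.2 \subset p.2 -> good A p.
Proof.
move=> /implyP Hr e /subsetP s; apply/implyP => hb.
rewrite -e in hb; case/set0Pn: (Hr hb) => x /setIP [xA xB].
by apply/set0Pn; exists x; rewrite inE xA (s _ xB).
Qed.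

Lemma good_triv q (A : NE q) (p : Pr q) : p.1 \in p.2 -> good A p.
Proof. by move=> h; apply/implyP => hb; apply/set0Pn; exists p.1; rewrite inE hb h. Qed.

Lemma Qset_circ q (X : {set Pr q}) : Qset (circ X) = Qset X.
Proof.
apply/eqP; rewrite eqEsubset; apply/andP; split.
  by apply: Qset_anti; apply/subsetP => p pX; rewrite inE; apply: decPI; constructor.
apply: Qset_le => A H p; rewrite inE => /decPP.
elim => [r /H //|p1 r1 _ H1 _ H2]; exact: good_comp.
Qed.

Lemma Qset_closure q (X : {set Pr q}) : Qset (closureD X) = Qset X.
Proof.
rewrite -(Qset_circ X); apply/eqP; rewrite eqEsubset; apply/andP; split.
  apply: Qset_anti; apply/subsetP => p pX; rewrite in_setU; apply/orP; left.
  by apply/bigcupP; exists p => //; rewrite inE eqxx subxx.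
apply: Qset_le => A H p; rewrite in_setU => /orP [|].
  case/bigcupP => r rC; rewrite inE => /andP [/eqP e s].
  by apply: (good_ext (H r rC)).
by rewrite inE => h; apply: good_triv.
Qed.

Lemma Qset_min q (X : {set Pr q}) : Qset (minD X) = Qset X.
Proof.
apply/eqP; rewrite eqEsubset; apply/andP; split; last first.
  by apply: Qset_anti; apply/subsetP => p; rewrite inE => /andP [].
apply: Qset_le => A H p pX.
have [tp|ntp] := boolP (p.1 \in p.2); first exact: good_triv.
pose P := [pred r : Pr q | (r \in X) && ((r.1 == p.1) && (r.2 \subset p.2))].
have Pp : P p by rewrite /= pX eqxx subxx.
case: (arg_minnP (fun r : Pr q => #|r.2|) Pp) => r /= /andP [rX /andP [/eqP e s]] Hmin.
apply: (good_ext _ e s); apply: H; rewrite inE rX /=; apply/andP; split.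
  rewrite /trivial_pair e; apply/negP => h.
  by rewrite (subsetP s _ h) in ntp.
apply/forall_inP => r' r'X; apply/negP => /andP [/eqP e' pr].
have : P r'.
  rewrite /= r'X e' e eqxx /=; apply: subset_trans s.
  by apply: proper_sub.
move=> /Hmin; rewrite leqNgt (proper_card pr) //.
Qed.

Lemma same_of_Q k q (X Y : {set Pr q}) : Qset X = Qset Y -> same_ideal (E k X) (E k Y).
Proof. by move=> h f; rewrite /E /eps h. Qed.

Theorem lemma3p10 (k : fieldType) (q : nat) (D : {set Pr q}) :
  (0 < q)%N -> (0 < #|D|)%N -> (forall p, p \in D -> (2 <= #|p.2|)%N) ->
  same_ideal (E k D) (E k (circ D)) /\
  same_ideal (E k D) (E k (closureD D)) /\
  same_ideal (E k D) (E k (minD D)) /\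
  same_ideal (E k D) (E k (minD (closureD D))) /\
  same_ideal (E k D) (E k (minD (circ D))).
Proof.
move=> _ _ _.
split; first by apply: same_of_Q; rewrite Qset_circ.
split; first by apply: same_of_Q; rewrite Qset_closure.
split; first by apply: same_of_Q; rewrite Qset_min.
split; first by apply: same_of_Q; rewrite Qset_min Qset_closure.
by apply: same_of_Q; rewrite Qset_min Qset_circ.
Qed.
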